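(* Let $\alpha>0$ be the fraction of perfect labelers. There is an absolute constant $C$ such that the following holds. For a finite unlabeled sample set $S\subseteq\mathcal{X}$ and $\delta>0$, consider the procedure $\textsc{Prune-and-Label}(S,\delta)$: for each $x\in S$, draw a set $L$ of $k=\lceil C\alpha^{-2}\log(|S|/\delta)\rceil$ labelers independently from $P$; if $\mathrm{Maj\text{-}size}_L(x)\le1-\frac\alpha4$, make a golden query $y^*=f^*(x)$ and prune the labelers (replace $P$ by $P$ conditioned on labelers $i$ with $\ell_i(x)=y^*$), stopping the procedure; otherwise add $(x,\mathrm{Maj}_L(x))$ to the output $\bar S$. Then with probability at least $1-\delta$, either the procedure prunes the set of labelers, or its output $\bar S$ satisfies $y=f^*(x)$ for all $(x,y)\in\bar S$.
   Context: There is an unknown target $f^*:\mathcal{X}\to\{+1,-1\}$. Labeler $i$ is a function $\ell_i:\mathcal{X}\to\{+1,-1\}$, perfect if $\ell_i$ agrees with $f^*$; non-perfect labelers are arbitrary fixed functions. $P$ is the uniform distribution over labelers and $\alpha$ is the $P$-probability that a labeler is perfect. For a set $L$ of labelers, $\mathrm{Maj}_L(x)$ is the label given to $x$ by the majority of labelers in $L$, and $\mathrm{Maj\text{-}size}_L(x)$ is the fraction of labelers in $L$ whose label on $x$ equals $\mathrm{Maj}_L(x)$. A golden query on $x$ returns $f^*(x)$. *)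

(* Defs.v *)
From HB Require Import structures.
From mathcomp Require Import all_boot all_order all_algebra.
From mathcomp Require Import boolp reals exp.
Set Implicit Arguments. Unset Strict Implicit. Unset Printing Implicit Defensive.
Import Order.TTheory GRing.Theory Num.Theory.
Local Open Scope ring_scope.

Section PruneAndLabel.
Variables (R : realType) (X : eqType) (n : nat).
(* labelers are indexed by 'I_n; labels +1/-1 are encoded as true/false *)
Variables (lab : 'I_n -> X -> bool) (fstar : X -> bool).

Definition perfect (i : 'I_n) : bool := `[< forall x, lab i x = fstar x >].

(* alpha = P-probability (P uniform on 'I_n) that a labeler is perfect *)
Definition alpha : R := #|[set i | perfect i]|%:R / n%:R.

(* Maj_L(x) for a multiset (tuple) L of labelers; ties -> +1 (irrelevant:
   a tie gives Maj-size 1/2 <= 1 - alpha/4, hence a prune). *)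
Definition maj (L : seq 'I_n) (x : X) : bool :=
  (count (fun i => ~~ lab i x) L <= count (fun i => lab i x) L)%N.

Definition maj_size (L : seq 'I_n) (x : X) : R :=
  (count (fun i => lab i x == maj L x) L)%:R / (size L)%:R.

Inductive outcome := Pruned | Output of seq (X * bool).

(* Run of Prune-and-Label on S, the k labelers drawn for the j-th point
   being given with it.  Pruning stops the procedure. *)
Fixpoint pal_run (a : R) (xs : seq (X * seq 'I_n)) : outcome :=
  match xs with
  | [::] => Output [::]
  | (x, L) :: t =>
      if maj_size L x <= 1 - a / 4 then Pruned
      else match pal_run a t with
           | Pruned => Pruned
           | Output o => Output ((x, maj L x) :: o)
           end
  end.

Definition pal_good (o : outcome) : bool :=
  match o with
  | Pruned => true
  | Output o => all (fun p => p.2 == fstar p.1) o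
  end.

(* All draws are made up front: omega assigns to the j-th point of S an
   independent uniform k-tuple of labelers (before a prune P is unchanged,
   i.e. uniform; draws after a prune are never used). *)
Definition pal_outcome (a : R) (S : seq X) (k : nat)
    (omega : (size S).-tuple (k.-tuple 'I_n)) : outcome :=
  pal_run a (zip S (map (fun L : k.-tuple 'I_n => val L) omega)).

Definition success_prob (S : seq X) (k : nat) : R :=
  #|[set omega : (size S).-tuple (k.-tuple 'I_n) |
      pal_good (pal_outcome alpha omega)]|%:R
  / #|{: (size S).-tuple (k.-tuple 'I_n)}|%:R.

End PruneAndLabel.

(* ceiling of a real, as a natural number (0 if the ceiling is negative) *)
Definition ceiln {R : realType} (x : R) : nat := absz (Num.max 0%R (Num.ceil x)).

(* Main.v *)
Require Import Defs.
From HB Require Import structures.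
From mathcomp Require Import all_boot all_order all_algebra.
From mathcomp Require Import boolp reals exp sequences.
From mathcomp Require Import ring lra.
Import Order.TTheory GRing.Theory Num.Theory.
Local Open Scope ring_scope.

Lemma sum_tuple_prod (R : realType) (T : finType) (s : nat) (f : 'I_s -> T -> R) :
  \sum_(t : s.-tuple T) \prod_(i < s) f i (tnth t i) = \prod_(i < s) \sum_(x : T) f i x.
Proof.
rewrite bigA_distr_bigA /=.
rewrite (reindex (fun t : s.-tuple T => [ffun i => tnth t i])) /=.
  by apply: eq_bigr => t _; apply: eq_bigr => i _; rewrite ffunE.
exists (fun g : {ffun 'I_s -> T} => [tuple g i | i < s]) => [t _|g _].
  by apply: eq_from_tnth => i; rewrite tnth_mktuple ffunE.
by apply/ffunP => i; rewrite ffunE tnth_mktuple.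
Qed.

Lemma prod_tuple_const (R : realType) (T : finType) (k : nat) (w : T -> R) :
  \sum_(t : k.-tuple T) \prod_(i < k) w (tnth t i) = (\sum_x w x) ^+ k.
Proof. by rewrite (@sum_tuple_prod R T k (fun _ => w)) prodr_const card_ord. Qed.

Lemma prod_count (R : realType) (T : Type) (p : pred T) (c : R) (s : seq T) :
  \prod_(x <- s) (if p x then c else 1) = c ^+ count p s.
Proof.
elim: s => [|x s IH]; first by rewrite big_nil.
by rewrite big_cons IH /=; case: (p x); rewrite ?mul1r ?add0n ?exprS.
Qed.

Lemma chernoff (R : realType) n (agree : pred 'I_n) (a : R) k :
  0 <= a -> a * n%:R <= #|agree|%:R ->
  \sum_(L : k.-tuple 'I_n) ((count agree L)%:R < k%:R * a / 4 :> R)%:R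
    <= n%:R ^+ k * expR (- (k%:R * a / 4)).
Proof.
move=> a0 Hag.
pose e : R := expR (-1).
pose w x := if agree x then e else 1.
have e0 : 0 < e by apply: expR_gt0.
have ehalf : e <= 1/2.
  have h1 := expRxMexpNx_1 (1 : R).
  have h2 := expR_ge1Dx (1 : R).
  rewrite -/e in h1. move: e0 h1 h2; clear; move: (expR 1) => E; rewrite /e; move: (expR (-1)) => x h0 h1 h2; nra.
apply: (@le_trans _ _ (\sum_(L : k.-tuple 'I_n) expR (k%:R * a / 4) * \prod_(i < k) w (tnth L i))).
  apply: ler_sum => L _.
  have -> : \prod_(i < k) w (tnth L i) = expR (- (count agree L)%:R).
    rewrite -(big_tuple _ _ L predT w) prod_count /e -expRM_natr; congr expR; ring.
  case: ltP => H; last by rewrite mulr_ge0 ?expR_ge0.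
  rewrite -expRD; apply: le_trans (expR_ge1Dx _); clear w ehalf e0 e; rewrite /= mulr1n; lra.
rewrite -mulr_sumr prod_tuple_const.
have Hw : \sum_x w x = n%:R - #|agree|%:R * (1 - e).
  have -> : \sum_x w x = \sum_x (1 - (agree x)%:R * (1 - e)).
    by apply: eq_bigr => x _; rewrite /w; case: (agree x); rewrite /= ?mul0r ?mul1r; ring.
  rewrite sumrB sumr_const card_ord -mulr_suml; congr (_ - _ * _).
  rewrite (eq_bigr (fun x => if agree x then 1 else 0)); last by move=> x _; case: (agree x).
  by rewrite -big_mkcond sumr_const.
have Hw0 : 0 <= \sum_x w x by apply: sumr_ge0 => x _; rewrite /w; case: (agree x) => //; apply: ltW.
have Hle : \sum_x w x <= n%:R * expR (- (a / 2)).
  rewrite Hw.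
  have h3 := expR_ge1Dx (- (a / 2)).
  have hn : 0 <= n%:R :> R by [].
  have hc : 0 <= #|agree|%:R :> R by [].
  move: hn hc h3 Hag ehalf e0; clear Hw Hw0.
  move: (n%:R : R) (#|agree|%:R : R) (expR (- (a / 2))) => N C E.
  rewrite /w /e; clear w e; move: (expR (-1)) => x.
  move=> *; nra.
apply: (@le_trans _ _ (expR (k%:R * a / 4) * (n%:R * expR (- (a / 2))) ^+ k)).
  rewrite ler_pM2l ?expR_gt0 //; apply: lerXn2r => //; rewrite nnegrE //.
  by rewrite mulr_ge0 ?expR_ge0.
rewrite exprMn -expRM_natl mulrCA -expRD.
apply: ler_wpM2l; first exact: exprn_ge0.
rewrite ler_expR; lra.
Qed.
Lemma pal_bad (R : realType) (X : eqType) n (lab : 'I_n -> X -> bool) fstar (a : R) xs :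
  ~~ pal_good fstar (pal_run lab a xs) ->
  has (fun p => (1 - a/4 < maj_size R lab p.2 p.1) && (maj lab p.2 p.1 != fstar p.1)) xs.
Proof.
elim: xs => [|[x L] t IH] //=.
case: ifP => H //.
case E: (pal_run lab a t) => [|o] //=.
rewrite negb_and => /orP [Hm|Ht].
  by rewrite ltNge H Hm.
by rewrite IH ?orbT // E.
Qed.

Lemma count_small (R : realType) (X : eqType) n (lab : 'I_n -> X -> bool) fstar (a : R)
   (L : seq 'I_n) x k :
  size L = k -> a <= 1 -> 1 - a/4 < maj_size R lab L x -> maj lab L x != fstar x ->
  (count (fun i => lab i x == fstar x) L)%:R < k%:R * a / 4.
Proof.
move=> Hs Ha1 Hms Hne.
have Hc : (count (fun i => lab i x == fstar x) L + count (fun i => lab i x == maj lab L x) L = k)%N.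
  rewrite -Hs -(count_predC (fun i => lab i x == maj lab L x)) addnC.
  congr (_ + _)%N; apply: eq_count => i /=.
  by move: Hne; case: (lab i x); case: (maj lab L x); case: (fstar x).
move: Hms; rewrite /maj_size Hs.
case: k Hs Hc => [|k] Hs Hc.
  by rewrite invr0 mulr0; lra.
rewrite ltr_pdivlMr ?ltr0Sn // => H.
have : (count (fun i => lab i x == fstar x) L)%:R + (count (fun i => lab i x == maj lab L x) L)%:R = k.+1%:R :> R.
  by rewrite -natrD Hc.
lra.
Qed.
Lemma sum_tuple_coord (R : realType) (T : finType) (s : nat) (j : 'I_s) (F : T -> R) :
  \sum_(t : s.-tuple T) F (tnth t j) = #|T|%:R ^+ s.-1 * \sum_(x : T) F x.
Proof.
pose f (i : 'I_s) (x : T) := if i == j then F x else 1.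
transitivity (\sum_(t : s.-tuple T) \prod_(i < s) f i (tnth t i)).
  apply: eq_bigr => t _; rewrite (bigD1 j) //= big1 ?mulr1 /f ?eqxx //.
  by move=> i /negbTE ->.
rewrite sum_tuple_prod (bigD1 j) //= /f eqxx mulrC; congr (_ * _).
rewrite (eq_bigr (fun _ => #|T|%:R)); last first.
  by move=> i /negbTE ->; rewrite sumr_const.
rewrite prodr_const; congr (_ ^+ _).
by rewrite cardC1 card_ord.
Qed.

Lemma main_bound (R : realType) (X : eqType) (n : nat) (lab : 'I_n -> X -> bool) (fstar : X -> bool)
   (S : seq X) (k : nat) :
  let a := alpha R lab fstar in 0 < a ->
  \sum_(omega : (size S).-tuple (k.-tuple 'I_n))
     (~~ pal_good fstar (pal_outcome lab a omega))%:R
  <= (size S)%:R * ((n ^ k)%:R ^+ size S * expR (- (k%:R * a / 4))) :> R.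
Proof.
move=> a Ha.
have n0 : (0 < n)%N.
  rewrite lt0n; apply/negP => /eqP n0; move: Ha; rewrite /a /alpha.
  have -> : n%:R = 0 :> R by rewrite n0.
  by rewrite invr0 mulr0 ltxx.
have Hc : (#|[set i | perfect lab fstar i]| <= n)%N.
  by rewrite -[X in (_ <= X)%N]card_ord max_card.
have a1 : a <= 1.
  rewrite /a /alpha ler_pdivrMr ?ltr0n // mul1r ler_nat //.
set s := size S.
pose xj (j : 'I_s) := tnth (in_tuple S) j.
pose bad (j : 'I_s) (L : k.-tuple 'I_n) :=
  (count (fun i => lab i (xj j) == fstar (xj j)) L)%:R < k%:R * a / 4 :> R.
apply: (@le_trans _ _ (\sum_(omega : s.-tuple (k.-tuple 'I_n)) \sum_(j < s) (bad j (tnth omega j))%:R)).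
  apply: ler_sum => omega _.
  case: (boolP (pal_good _ _)) => Hg; first by rewrite /= sumr_ge0.
  have [j Hj] : exists j, bad j (tnth omega j).
    move: Hg; rewrite /pal_outcome => /pal_bad Hh.
    have [p _ _] := hasP Hh.
    move/(has_nthP p): Hh => [i]; rewrite size_zip size_map !size_tuple minnn => Hi.
    case: p => x0 L0.
    rewrite nth_zip ?size_map ?size_tuple //= => /andP [Hm Hne].
    exists (Ordinal Hi).
    rewrite /bad /xj.
    rewrite (nth_map (tnth omega (Ordinal Hi))) ?size_tuple // in Hm Hne.
    have E : nth (tnth omega (Ordinal Hi)) omega i = tnth omega (Ordinal Hi).
      by rewrite [RHS](tnth_nth (tnth omega (Ordinal Hi))).
    rewrite E in Hm Hne.
    rewrite (tnth_nth x0) /=.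
    apply: (@count_small R X n lab fstar a _ _ k _ a1 Hm Hne).
    by rewrite size_tuple.
  rewrite (bigD1 j) //= Hj /= lerDl; apply: sumr_ge0 => i _; exact: ler0n.
rewrite exchange_big /=.
have card_all : #|{: k.-tuple 'I_n}|%:R = (n ^ k)%:R :> R by rewrite card_tuple card_ord.
apply: (@le_trans _ _ (\sum_(j < s) ((n ^ k)%:R ^+ s * expR (- (k%:R * a / 4))))); last first.
  by rewrite sumr_const card_ord -[_ *+ s]mulr_natl.
apply: ler_sum => j _.
rewrite (@sum_tuple_coord R _ s j (fun L => (bad j L)%:R)) card_all.
have s0 : (0 < s)%N by apply: leq_ltn_trans (ltn_ord j).
rewrite -[in X in _ <= X](prednK s0) exprS (mulrC (n ^ k)%:R) -[X in _ <= X]mulrA.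
apply: ler_wpM2l; first exact: exprn_ge0.
rewrite natrX.
apply: (@chernoff R n (fun i => lab i (xj j) == fstar (xj j))); first exact: ltW.
have -> : a * n%:R = #|[set i | perfect lab fstar i]|%:R.
  by rewrite /a /alpha mulfVK // pnatr_eq0 -lt0n.
rewrite ler_nat; apply: subset_leq_card; apply/subsetP => i.
by rewrite inE => /asboolP H; rewrite unfold_in /= H.
Qed.
Lemma ceiln_ge (R : realType) (x : R) : x <= (ceiln x)%:R.
Proof.
rewrite /ceiln natr_absz ger0_norm; last by rewrite le_max lexx.
apply: le_trans (ceil_ge x) _.
by rewrite ler_int le_max lexx orbT.
Qed.

Lemma num_bound (R : realType) (a d : R) (s k : nat) :
  0 < a -> a <= 1 -> 0 < d -> d < 1 ->
  4 * a ^- 2 * ln (s%:R / d) <= k%:R ->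
  s%:R * expR (- (k%:R * a / 4)) <= d.
Proof.
move=> a0 a1 d0 d1 hk.
case: s hk => [|s] hk; first by rewrite mul0r ltW.
have hsd : 1 < s.+1%:R / d.
  rewrite ltr_pdivlMr // mul1r; apply: lt_le_trans d1 _.
  by rewrite ler1n.
have L0 := ln_gt0 hsd.
have hai : 1 <= a^-1 by rewrite invf_ge1.
have haai : a * a^-1 = 1 by rewrite mulfV // gt_eqF.
have hL : ln (s.+1%:R / d) <= k%:R * a / 4.
  move: hk; rewrite -exprVn.
  move: (ln (s.+1%:R / d)) L0 => L L0.
  move: (a^-1) hai haai => ai hai haai hk.
  have h1 : 4 * ai ^+ 2 * L * a <= k%:R * a by rewrite ler_pM2r.
  have h2 : 4 * ai ^+ 2 * L * a = 4 * ai * L.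
    by rewrite expr2 -!mulrA [ai * (L * a)]mulrC -!mulrA haai; ring.
  nra.
apply: (@le_trans _ _ (s.+1%:R * expR (- ln (s.+1%:R / d)))).
  by rewrite ler_pM2l ?ltr0Sn // ler_expR lerN2.
rewrite expRN lnK; last by rewrite posrE (lt_trans ltr01 hsd).
rewrite invf_div mulrA mulrC mulrA mulVf ?mul1r //.
by rewrite pnatr_eq0.
Qed.

Theorem lemma10 (R : realType) :
  exists C : R, 0 < C /\
  forall (X : eqType) (n : nat) (lab : 'I_n -> X -> bool) (fstar : X -> bool)
         (S : seq X) (delta : R),
    0 < alpha R lab fstar -> uniq S -> 0 < delta ->
    let a := alpha R lab fstar in
    let k := ceiln (C * a ^- 2 * ln ((size S)%:R / delta)) in
    1 - delta <= success_prob R lab fstar S k.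
Proof.
exists 4; split; first by rewrite ltr0n.
move=> X n lab fstar S delta Ha _ Hd; rewrite [is_true _]/=.
set a := alpha R lab fstar. set k := ceiln _.
have Hsp0 : 0 <= success_prob R lab fstar S k by rewrite /success_prob divr_ge0.
case: (leP 1 delta) => Hd1.
  by apply: le_trans Hsp0; rewrite subr_le0.
have n0 : (0 < n)%N.
  rewrite lt0n; apply/negP => /eqP n0; move: Ha; rewrite /alpha.
  have -> : n%:R = 0 :> R by rewrite n0.
  by rewrite invr0 mulr0 ltxx.
have a1 : a <= 1.
  rewrite /a /alpha ler_pdivrMr ?ltr0n // mul1r ler_nat //.
  by rewrite -[X in (_ <= X)%N]card_ord max_card.
have HM : #|{: (size S).-tuple (k.-tuple 'I_n)}|%:R = (n ^ k)%:R ^+ size S :> R.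
  by rewrite card_tuple card_tuple card_ord natrX.
have M0 : 0 < (n ^ k)%:R ^+ size S :> R by rewrite exprn_gt0 // ltr0n expn_gt0 n0.
pose B := \sum_(omega : (size S).-tuple (k.-tuple 'I_n))
     (~~ pal_good fstar (pal_outcome lab a omega))%:R : R.
have HB := @main_bound R X n lab fstar S k Ha.
have Hnum := @num_bound R a delta (size S) k Ha a1 Hd Hd1 (ceiln_ge _ _).
have Hgood : #|[set omega : (size S).-tuple (k.-tuple 'I_n) |
      pal_good fstar (pal_outcome lab (alpha R lab fstar) omega)]|%:R
      = (n ^ k)%:R ^+ size S - B :> R.
  rewrite -sum1_card natr_sum big_mkcond /= -HM /B.
  rewrite -sumr_const -sumrB; apply: eq_bigr => omega _.
  by rewrite inE /a; case: pal_good; rewrite /= ?subr0 ?subrr.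
rewrite /success_prob Hgood HM.
rewrite ler_pdivlMr // mulrBl mul1r lerD2l lerN2.
apply: le_trans HB _.
rewrite mulrCA [X in _ <= X]mulrC ler_pM2l //.
Qed.
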